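(* Let $N$ be a finite abelian group, $F$ a finite field, $R=F[N]$, and let $A\in R^{r_A\times n_A}$, $B\in R^{r_B\times n_B}$. Suppose the $F$-linear classical codes $C_A^\perp=\ker\boldsymbol A$ and $C_B^\perp=\ker\boldsymbol B$ are both zero. Then the quasi-abelian LP code $\mathrm{LP}[A,B]$ is trivial, i.e., has dimension $0$.
   Context: For $x\in R=F[N]$, $\mathrm L_N(x)$ is the $|N|\times|N|$ matrix $[\mathrm L_N(x)]_{\alpha,\beta}=\sum_g x_g\delta_{\alpha,g\beta}$. For a matrix $X$ over $R$, $\boldsymbol X$ denotes the matrix over $F$ obtained by replacing every entry $x$ by the block $\mathrm L_N(x)$; $\ker\boldsymbol X$ is its null space (vectors $u$ with $\boldsymbol Xu=0$). The LP code $\mathrm{LP}[A,B]$ is the CSS code over $F$ with $\boldsymbol H_X=\boldsymbol{\bigl(A\otimes I_{r_B}\ \ I_{r_A}\otimes B\bigr)}$ and $\boldsymbol H_Z=\Bigl(\boldsymbol{\begin{pmatrix}I_{n_A}\otimes B\\ -A\otimes I_{n_B}\end{pmatrix}}\Bigr)^T$, where $I_m$ is the $m\times m$ identity over $R$ and $\otimes$ is the Kronecker product over the commutative ring $R$; its dimension is $n-\mathrm{rank}\boldsymbol H_X-\mathrm{rank}\boldsymbol H_Z$ with $n=|N|(n_Ar_B+r_An_B)$. *)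

(* Defs.v *)
From HB Require Import structures.
From mathcomp Require Import all_boot all_order all_algebra.
Set Implicit Arguments. Unset Strict Implicit. Unset Printing Implicit Defensive.
Import GRing.Theory.
Local Open Scope ring_scope.

(* N : finite abelian group, written additively (finZmodType).
   F : finite field.  The group algebra R = F[N] is represented by the
   coefficient functions {ffun N -> F} (x = \sum_g x_g g). *)

Section LP.
Variables (F : finFieldType) (N : finZmodType).

Definition GA := {ffun N -> F}.

Definition ga_zero : GA := [ffun _ => 0].
Definition ga_one : GA := [ffun g => (g == 0)%:R].
Definition ga_opp (x : GA) : GA := [ffun g => - x g].
Definition ga_mul (x y : GA) : GA := [ffun g => \sum_h x h * y (g - h)].

Definition LN (x : GA) (a b : N) : F := \sum_g x g * (a == g + b)%:R.

Definition rmat (I J : finType) := I -> J -> GA.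

(* bold X : replace each entry x by the block L_N(x);
   row index (i, alpha), column index (j, beta) *)
Definition bold (I J : finType) (X : rmat I J) : (I * N)%type -> (J * N)%type -> F :=
  fun p q => LN (X p.1 q.1) p.2 q.2.

Definition mx_of (T U : finType) (f : T -> U -> F) : 'M[F]_(#|T|, #|U|) :=
  \matrix_(i, j) f (enum_val i) (enum_val j).

Definition ker_trivial (T U : finType) (f : T -> U -> F) :=
  forall u : 'cV[F]_(#|U|), mx_of f *m u = 0 -> u = 0.

Definition rfun m n (A : 'M[GA]_(m, n)) : rmat 'I_m 'I_n := fun i j => A i j.

Definition idR m : rmat 'I_m 'I_m := fun k l => if k == l then ga_one else ga_zero.

Definition kronR (I J K L : finType) (X : rmat I J) (Y : rmat K L)
  : rmat (I * K)%type (J * L)%type := fun p q => ga_mul (X p.1 q.1) (Y p.2 q.2).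

Definition negR (I J : finType) (X : rmat I J) : rmat I J :=
  fun i j => ga_opp (X i j).

Definition rowR (I J1 J2 : finType) (X : rmat I J1) (Y : rmat I J2)
  : rmat I (J1 + J2)%type :=
  fun i q => match q with inl j => X i j | inr j => Y i j end.

Definition colR (I1 I2 J : finType) (X : rmat I1 J) (Y : rmat I2 J)
  : rmat (I1 + I2)%type J :=
  fun p j => match p with inl i => X i j | inr i => Y i j end.

Variables (rA nA rB nB : nat).

Definition HX (A : 'M[GA]_(rA, nA)) (B : 'M[GA]_(rB, nB)) :=
  mx_of (bold (rowR (kronR (rfun A) (@idR rB)) (kronR (@idR rA) (rfun B)))).

Definition HZ (A : 'M[GA]_(rA, nA)) (B : 'M[GA]_(rB, nB)) :=
  (mx_of (bold (colR (kronR (@idR nA) (rfun B))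
                     (negR (kronR (rfun A) (@idR nB))))))^T.

Definition LP_dim (A : 'M[GA]_(rA, nA)) (B : 'M[GA]_(rB, nB)) : int :=
  (#|N| * (nA * rB + rA * nB))%:Z - (\rank (HX A B))%:Z - (\rank (HZ A B))%:Z.

End LP.

(* Main.v *)
Require Import Defs.
From HB Require Import structures.
From mathcomp Require Import all_boot all_order all_algebra.
Set Implicit Arguments. Unset Strict Implicit. Unset Printing Implicit Defensive.
Import GRing.Theory.
Local Open Scope ring_scope.

Section GARing.
Variables (F : finFieldType) (N : finZmodType).

HB.instance Definition _ := GRing.Zmodule.on (GA F N).

Lemma ga_mulC : commutative (@ga_mul F N).
Proof.
move=> x y; apply/ffunP => g; rewrite !ffunE.
rewrite (reindex_inj (inv_inj (subKr g))) /=.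
by apply: eq_bigr => h _; rewrite subKr mulrC.
Qed.

Lemma ga_mul1l : left_id (@ga_one F N) (@ga_mul F N).
Proof.
move=> x; apply/ffunP => g; rewrite !ffunE (bigD1 0) //= ffunE eqxx mul1r subr0.
rewrite big1 ?addr0 // => h /negbTE hn; by rewrite ffunE hn mul0r.
Qed.

Lemma ga_mulDl : left_distributive (@ga_mul F N) +%R.
Proof.
move=> x y z; apply/ffunP => g; rewrite !ffunE -big_split /=.
by apply: eq_bigr => h _; rewrite ffunE mulrDl.
Qed.

Lemma ga_mulA : associative (@ga_mul F N).
Proof.
move=> x y z; apply/ffunP => g; rewrite !ffunE.
under eq_bigr do rewrite ffunE big_distrr /=.
under [RHS]eq_bigr do rewrite ffunE big_distrl /=.
rewrite [RHS]exchange_big /=.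
apply: eq_bigr => k _.
rewrite [RHS](reindex_inj (addrI k)) /=.
apply: eq_bigr => m _.
by rewrite mulrA (addrC k m) addrK opprD addrA [g - m - k]addrAC.
Qed.

Lemma ga_one_neq0 : (@ga_one F N) != 0.
Proof.
apply/eqP => /ffunP /(_ 0); rewrite !ffunE eqxx /= => /eqP.
by rewrite oner_eq0.
Qed.

HB.instance Definition _ := GRing.Zmodule_isComNzRing.Build (GA F N)
  ga_mulA ga_mulC ga_mul1l ga_mulDl ga_one_neq0.

Lemma ga_mulE (x y : GA F N) : ga_mul x y = x * y. Proof. by []. Qed.
Lemma ga_oneE : @ga_one F N = (1 : GA F N). Proof. by []. Qed.
Lemma ga_zeroE : @ga_zero F N = (0 : GA F N). Proof. by apply/ffunP => g; rewrite !ffunE. Qed.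
Lemma ga_oppE (x : GA F N) : ga_opp x = - x. Proof. by apply/ffunP => g; rewrite !ffunE. Qed.

Lemma LNE (x : GA F N) a b : LN x a b = x (a - b).
Proof.
rewrite /LN (bigD1 (a - b)) //= subrK eqxx mulr1 big1 ?addr0 // => g hg.
have -> : (a == g + b) = false.
  by apply/negbTE; rewrite -subr_eq eq_sym.
by rewrite mulr0.
Qed.

Lemma LN_act (x f : GA F N) a : \sum_b LN x a b * f b = (x * f) a.
Proof.
rewrite -ga_mulE ffunE (reindex_inj (inv_inj (subKr a))) /=.
by apply: eq_bigr => h _; rewrite LNE subKr.
Qed.

Lemma sum_pairE (V : nmodType) (I J : finType) (G : I * J -> V) :
  \sum_p G p = \sum_i \sum_j G (i, j).
Proof. by rewrite pair_bigA; apply: eq_bigr => -[]. Qed.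

Definition vecR (J : finType) (f : J * N -> F) (j : J) : GA F N := [ffun b => f (j, b)].

Lemma bold_app (I J : finType) (X : rmat F N I J) (f : J * N -> F) p :
  \sum_q bold X p q * f q = (\sum_j X p.1 j * vecR f j) p.2.
Proof.
rewrite sum_pairE sum_ffunE; apply: eq_bigr => j _.
rewrite -LN_act; apply: eq_bigr => b _; by rewrite ffunE.
Qed.

Lemma idRE m (k l : 'I_m) : @idR F N m k l = (k == l)%:R.
Proof. by rewrite /idR; case: eqP => _; rewrite ?ga_zeroE. Qed.

Lemma idR1 m (k : 'I_m) : @idR F N m k k = 1.
Proof. by rewrite /idR eqxx. Qed.
Lemma idR0 m (k l : 'I_m) : k != l -> @idR F N m k l = 0.
Proof. by rewrite /idR => /negbTE ->; rewrite ga_zeroE. Qed.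
Lemma idR0s m (k l : 'I_m) : l != k -> @idR F N m k l = 0.
Proof. by rewrite eq_sym; apply: idR0. Qed.

Definition vec (T : finType) (f : T -> F) : 'rV[F]_#|T| := \row_i f (enum_val i).

Lemma vec_mulT (T U : finType) (M : U -> T -> F) (f : T -> F) :
  vec f *m (mx_of M)^T = vec (fun u => \sum_t M u t * f t).
Proof.
apply/rowP => k; rewrite !mxE.
rewrite [RHS](reindex (fun i : 'I_#|T| => enum_val i)); last by apply: onW_bij; apply: enum_val_bij.
by apply: eq_bigr => i _; rewrite !mxE mulrC.
Qed.

Lemma vec_of (T : finType) (r : 'rV[F]_#|T|) : r = vec (fun t => r 0 (enum_rank t)).
Proof. by apply/rowP => k; rewrite !mxE enum_valK. Qed.

Lemma vec_ext (T : finType) (f g : T -> F) : (forall t, f t = g t) -> vec f = vec g.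
Proof. by move=> h; apply/rowP => k; rewrite !mxE h. Qed.

Lemma vec_eq (T : finType) (f g : T -> F) : vec f = vec g -> forall t, f t = g t.
Proof. by move=> /rowP h t; move: (h (enum_rank t)); rewrite !mxE enum_rankK. Qed.

Lemma mx_ofT (T U : finType) (M : T -> U -> F) : (mx_of (fun u t => M t u))^T = mx_of M.
Proof. by apply/matrixP => i j; rewrite !mxE. Qed.

Lemma ker_surj (T U : finType) (M : T -> U -> F) : ker_trivial M ->
  forall t : U -> F, exists y : T -> F, forall q, t q = \sum_p y p * M p q.
Proof.
move=> H t.
have rk : \rank (mx_of M) = #|U|.
  have K0 : kermx (mx_of M)^T = 0.
    apply/row_matrixP => i; rewrite row0.
    apply: trmx_inj; rewrite trmx0; apply: H.
    by rewrite -[X in X *m _]trmxK -trmx_mul -row_mul mulmx_ker row0 trmx0.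
  have := mxrank_ker (mx_of M)^T; rewrite K0 mxrank0 mxrank_tr => /esym /eqP.
  rewrite subn_eq0 => h; apply/eqP; by rewrite eqn_leq rank_leq_col h.
have rf : row_full (mx_of M) by rewrite /row_full rk.
have /submxP [D hD] := submx_full (vec t) rf.
exists (fun p => D 0 (enum_rank p)) => q.
move: hD; rewrite {1}(vec_of D) -mx_ofT vec_mulT => /vec_eq ->.
by apply: eq_bigr => p _; rewrite mulrC.
Qed.


Lemma left_inv m n (A : 'M[GA F N]_(m, n)) :
  ker_trivial (bold (rfun A)) -> exists A' : 'M[GA F N]_(n, m), A' *m A = 1%:M.
Proof.
move=> H; have S := ker_surj H.
have : forall j : 'I_n, exists z : 'I_m -> GA F N,
    forall j', \sum_i z i * A i j' = (j == j')%:R.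
  move=> j; have [y hy] := S (fun q => ((j == q.1)%:R : GA F N) (- q.2)).
  exists (fun i => [ffun h => y (i, - h)]) => j'.
  apply/ffunP => b; have := hy (j', - b); rewrite /= opprK => ->.
  rewrite sum_pairE sum_ffunE; apply: eq_bigr => i _.
  rewrite -ga_mulE ffunE (reindex_inj oppr_inj) /=.
  apply: eq_bigr => a _; rewrite ffunE opprK /bold /= LNE /rfun.
  by rewrite opprK addrC.
move=> /fin_all_exists [Z hZ].
exists (\matrix_(j, i) Z j i); apply/matrixP => j j'; rewrite !mxE -hZ.
by apply: eq_bigr => i _; rewrite mxE.
Qed.

Lemma core rA nA rB nB (A : 'M[GA F N]_(rA, nA)) (B : 'M[GA F N]_(rB, nB)) A' B' U V :
  A' *m A = 1%:M -> B' *m B = 1%:M -> A *m U + V *m B^T = 0 ->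
  U = (U *m B'^T) *m B^T /\ V = - (A *m (U *m B'^T)).
Proof.
move=> hA hB E.
have hBt : B^T *m B'^T = 1%:M by rewrite -trmx_mul hB trmx1.
have hAU : A *m U = - (V *m B^T) by apply/eqP; rewrite -addr_eq0 E.
have hU : U = - (A' *m V *m B^T) by rewrite -[U]mul1mx -hA -mulmxA hAU mulmxN mulmxA.
split.
  rewrite {2}hU !mulNmx -[A' *m V *m B^T *m B'^T]mulmxA hBt mulmx1.
  by rewrite -hU.
by rewrite mulmxA hAU mulNmx opprK -mulmxA hBt mulmx1.
Qed.


Section LPsec.
Variables (rA nA rB nB : nat) (A : 'M[GA F N]_(rA, nA)) (B : 'M[GA F N]_(rB, nB)).

Definition TT := (('I_nA * 'I_rB) + ('I_rA * 'I_nB))%type.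

Definition Um (u : TT -> GA F N) : 'M[GA F N]_(nA, rB) := \matrix_(j, k) u (inl (j, k)).
Definition Vm (u : TT -> GA F N) : 'M[GA F N]_(rA, nB) := \matrix_(i, l) u (inr (i, l)).
Definition Wm (w : 'I_nA * 'I_nB -> GA F N) : 'M[GA F N]_(nA, nB) := \matrix_(j, l) w (j, l).

Lemma HX_R (u : TT -> GA F N) i k :
  \sum_t rowR (kronR (rfun A) (@idR F N rB)) (kronR (@idR F N rA) (rfun B)) (i, k) t * u t
  = (A *m Um u + Vm u *m B^T) i k.
Proof.
rewrite big_sumType /= !mxE !sum_pairE; congr (_ + _).
  apply: eq_bigr => j _; rewrite /kronR /= (bigD1 k) //= !ga_mulE idR1 mulr1.
  rewrite big1 ?addr0 ?mxE // => l  hl.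
  by rewrite !ga_mulE (idR0s hl) mulr0 mul0r.
rewrite (bigD1 i) //= [X in _ + X]big1 ?addr0.
  apply: eq_bigr => l _; rewrite /kronR /= !ga_mulE idR1 mul1r !mxE.
  by rewrite mulrC.
move=> i'  hi; apply: big1 => l _.
by rewrite /kronR /= !ga_mulE (idR0s hi) mul0r mul0r.
Qed.

Lemma HZ_R (w : 'I_nA * 'I_nB -> GA F N) t :
  \sum_c colR (kronR (@idR F N nA) (rfun B)) (negR (kronR (rfun A) (@idR F N nB))) t c * w c
  = match t with inl (j, k) => (Wm w *m B^T) j k | inr (i, l) => - (A *m Wm w) i l end.
Proof.
case: t => [[j k]|[i l]] /=; rewrite sum_pairE !mxE.
  rewrite (bigD1 j) //= [X in _ + X]big1 ?addr0.
    apply: eq_bigr => l _; rewrite /kronR /= !ga_mulE idR1 mul1r !mxE.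
    by rewrite mulrC.
  move=> j'  hj; apply: big1 => l _.
  by rewrite /kronR /= !ga_mulE (idR0s hj) mul0r mul0r.
rewrite -sumrN; apply: eq_bigr => j _.
rewrite (bigD1 l) //= [X in _ + X]big1 ?addr0.
  by rewrite /negR /kronR ga_oppE !ga_mulE idR1 mulr1 mulNr !mxE.
move=> l'  hl.
by rewrite /negR /kronR ga_oppE !ga_mulE (idR0s hl) mulr0 oppr0 mul0r.
Qed.

Definition Xf := bold (rowR (kronR (rfun A) (@idR F N rB)) (kronR (@idR F N rA) (rfun B))).
Definition Zf := bold (colR (kronR (@idR F N nA) (rfun B)) (negR (kronR (rfun A) (@idR F N nB)))).

Lemma compZ (g : ('I_nA * 'I_nB) * N -> F) q :
  \sum_c Zf q c * g c =
  (match q.1 with inl (j, k) => (Wm (vecR g) *m B^T) j k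
                | inr (i, l) => - (A *m Wm (vecR g)) i l end) q.2.
Proof. by rewrite /Zf bold_app HZ_R. Qed.

Lemma compX (f : TT * N -> F) i k a :
  \sum_q Xf ((i, k), a) q * f q = (A *m Um (vecR f) + Vm (vecR f) *m B^T) i k a.
Proof. by rewrite /Xf bold_app HX_R. Qed.

Lemma LP_main : ker_trivial (bold (rfun A)) -> ker_trivial (bold (rfun B)) -> LP_dim A B = 0.
Proof.
move=> hA hB.
have [A' hA'] := left_inv hA; have [B' hB'] := left_inv hB.
have eHX : HX A B = mx_of Xf by [].
have eHZ : HZ A B = (mx_of Zf)^T by [].
have Hcomp : forall (g : ('I_nA * 'I_nB) * N -> F) p,
    \sum_q Xf p q * (\sum_c Zf q c * g c) = 0.
  move=> g [[i k] a].
  pose f q := \sum_c Zf q c * g c.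
  have hUm : Um (vecR f) = Wm (vecR g) *m B^T.
    by apply/matrixP => j l; rewrite mxE; apply/ffunP => b; rewrite ffunE /f compZ.
  have hVm : Vm (vecR f) = - (A *m Wm (vecR g)).
    by apply/matrixP => j l; rewrite mxE; apply/ffunP => b; rewrite ffunE /f compZ mxE.
  rewrite (compX f) hUm hVm mulmxA mulNmx addrN mxE.
  by rewrite ffunE.
have hk : (HZ A B == kermx (HX A B)^T)%MS.
  apply/andP; split.
    apply/sub_kermxP; apply/row_matrixP => c; rewrite row0 row_mul rowE.
    rewrite (vec_of (delta_mx 0 c)) eHZ vec_mulT eHX vec_mulT.
    rewrite [RHS](vec_of 0); apply: vec_ext => p.
    by rewrite Hcomp mxE.
  apply/row_subP => r.
  set x := row r _.
  have hx : x *m (HX A B)^T = 0 by rewrite /x -row_mul mulmx_ker row0.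
  move: hx; rewrite (vec_of x) eHX vec_mulT [X in _ = X](vec_of 0) => /vec_eq hx.
  set f := fun t => x 0 (enum_rank t).
  have E : A *m Um (vecR f) + Vm (vecR f) *m B^T = 0.
    apply/matrixP => i k; apply/ffunP => a.
    by rewrite -compX hx !mxE ffunE.
  have [hU hV] := core hA' hB' E.
  set W := Um (vecR f) *m B'^T.
  pose g (c : ('I_nA * 'I_nB) * N) := W c.1.1 c.1.2 c.2.
  have hW : Wm (vecR g) = W.
    by apply/matrixP => j l; rewrite mxE; apply/ffunP => b; rewrite ffunE.
  apply/submxP; exists (vec g); rewrite eHZ vec_mulT.
  apply: vec_ext => -[t a]; rewrite compZ hW /=.
  case: t => [[j k]|[i l]].
    by rewrite -hU mxE ffunE.
  transitivity (Vm (vecR f) i l a); first by rewrite mxE ffunE.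
  by rewrite hV mxE.
rewrite /LP_dim (eqmx_rank hk) mxrank_ker mxrank_tr.
have hr := rank_leq_col (HX A B).
move: hr.
set s := (X in (X - \rank (HX A B))%N).
have hc : s = (#|N| * (nA * rB + rA * nB))%N.
  by rewrite /s !card_prod card_sum !card_prod !card_ord mulnC.
move=> hr; rewrite -(subzn hr) -hc; by rewrite subrr.
Qed.

End LPsec.

End GARing.

Theorem mainTheorem11 (F : finFieldType) (N : finZmodType)
    (rA nA rB nB : nat) (A : 'M[GA F N]_(rA, nA)) (B : 'M[GA F N]_(rB, nB)) :
  ker_trivial (bold (rfun A)) ->
  ker_trivial (bold (rfun B)) ->
  LP_dim A B = 0.
Proof. exact: LP_main. Qed.
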